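(* Let $(A_k)$ be a sequence in $S_n$ converging to $A\in S_n$. Then there is $k_0$ such that for all $k\ge k_0$ and all $i\in\{1,\dots,n\}$ there is a unique $\kappa(k,i)\in\{1,\dots,n\}$ with $\Lambda_{\kappa(k,i)}(A_k)=\Lambda_i(A)$ and, if $\kappa(k,i)\ne n$, $\Lambda_{\kappa(k,i)+1}(A_k)\neq\Lambda_i(A)$. Moreover, if $i'$ is minimal with $\mathrm{syst}_{i'}(A)=\mathrm{syst}_i(A)$, then $\lim_{k\to\infty}\mathrm{syst}_{j_k}(A_k)=\mathrm{syst}_i(A)$ for every choice of integers $j_k$ with $\kappa(k,i'-1)<j_k\le\kappa(k,i)$.
   Context: $S_n=\mathrm{SO}_n\backslash\mathrm{SL}_n\mathbb R$; a point is represented by $A\in\mathrm{SL}_n\mathbb R$ up to left $\mathrm{SO}_n$. For $i=1,\dots,n$, $\mathrm{syst}_i(A)=\inf\{r>0:\dim_{\mathbb R}\mathrm{Span}_{\mathbb R}\{v\in\mathbb Z^n:|Av|<r\}\ge i\}$, and $\Lambda_i(A)=\mathrm{Span}_{\mathbb R}\{v\in\mathbb Z^n:|Av|\le\mathrm{syst}_i(A)\}$; by convention $\Lambda_0(A)=0$ (and correspondingly $\kappa(k,0)=0$). Thus $0\subsetneq\Lambda_1(A)\subset\dots\subset\Lambda_n(A)=\mathbb R^n$ with $\dim\Lambda_i(A)\ge i$. *)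

(* Defs.v *)
From Stdlib Require Import Reals Lra Lia ZArith Arith ClassicalEpsilon.
Open Scope R_scope.

(* Real n x n matrices and vectors are functions on nat; only indices < n matter. *)
Definition mat := nat -> nat -> R.
Definition vecZ := nat -> Z.
Definition vecR := nat -> R.

Fixpoint sumR (m : nat) (f : nat -> R) : R :=
  match m with O => 0 | S m' => sumR m' f + f m' end.

Definition mat_mul (n : nat) (A B : mat) : mat :=
  fun i j => sumR n (fun l => A i l * B l j).

Definition minor (j : nat) (M : mat) : mat :=
  fun a b => M (S a) (if (b <? j)%nat then b else S b).

Fixpoint det (n : nat) (M : mat) : R :=
  match n with
  | O => 1
  | S n' => sumR (S n') (fun j => (-1) ^ j * M O j * det n' (minor j M))
  end.

Definition SL (n : nat) (A : mat) : Prop := det n A = 1.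
Definition SO (n : nat) (Q : mat) : Prop :=
  det n Q = 1 /\
  forall i j, (i < n)%nat -> (j < n)%nat ->
    sumR n (fun l => Q l i * Q l j) = if Nat.eqb i j then 1 else 0.

Definition matvec (n : nat) (A : mat) (v : vecZ) : vecR :=
  fun i => sumR n (fun j => A i j * IZR (v j)).
Definition normAv (n : nat) (A : mat) (v : vecZ) : R :=
  sqrt (sumR n (fun i => (matvec n A v i) ^ 2)).

Definition lin_indep (n m : nat) (w : nat -> vecZ) : Prop :=
  forall c : nat -> R,
    (forall t, (t < n)%nat -> sumR m (fun l => c l * IZR (w l t)) = 0) ->
    forall l, (l < m)%nat -> c l = 0.

(* { r > 0 : dim Span_R {v in Z^n : |Av| < r} >= i }, using that the span of a
   set has dimension >= i iff the set contains i linearly independent vectors *)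
Definition syst_set (n : nat) (A : mat) (i : nat) (r : R) : Prop :=
  0 < r /\ exists w : nat -> vecZ,
    lin_indep n i w /\ forall l, (l < i)%nat -> normAv n A (w l) < r.

Definition is_inf (S : R -> Prop) (s : R) : Prop :=
  (forall r, S r -> s <= r) /\ (forall b, (forall r, S r -> b <= r) -> b <= s).

Definition syst (n : nat) (A : mat) (i : nat) : R :=
  epsilon (inhabits 0) (fun s => is_inf (syst_set n A i) s).

(* Lambda_i(A) = Span_R {v in Z^n : |Av| <= syst_i(A)} as a predicate on R^n;
   Lambda_0(A) = 0 by convention *)
Definition Lambda (n : nat) (A : mat) (i : nat) : vecR -> Prop :=
  fun x => match i with
  | O => forall t, (t < n)%nat -> x t = 0
  | S _ => exists (m : nat) (w : nat -> vecZ) (c : nat -> R),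
      (forall l, (l < m)%nat -> normAv n A (w l) <= syst n A i) /\
      forall t, (t < n)%nat -> x t = sumR m (fun l => c l * IZR (w l t))
  end.

(* equality of subspaces of R^n (vectors compared on coordinates < n) *)
Definition same_space (P Q : vecR -> Prop) : Prop := forall x, P x <-> Q x.

Definition kappa_prop (n : nat) (Ak A : mat) (i j : nat) : Prop :=
  same_space (Lambda n Ak j) (Lambda n A i) /\
  (j <> n -> ~ same_space (Lambda n Ak (S j)) (Lambda n A i)).

(* Main.v *)
Require Import Defs.
From Stdlib Require Import Reals Lra Lia ZArith Arith ClassicalEpsilon Classical List FunctionalExtensionality.
From mathcomp Require all_boot all_algebra Rstruct.
Open Scope R_scope.

Lemma det_S n M : det (S n) M = sumR (S n) (fun j => (-1) ^ j * M O j * det n (minor j M)).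
Proof. reflexivity. Qed.

Module Br.
Import all_boot all_algebra Rstruct.
Import GRing.Theory.
Local Open Scope ring_scope.

Lemma sumR_big n (f : nat -> R) : sumR n f = \sum_(i < n) f i.
Proof.
elim: n => [|n IH] /=; first by rewrite big_ord0.
by rewrite big_ord_recr /= IH.
Qed.

Definition mxof n (A : mat) : 'M[R]_n := \matrix_(i < n, j < n) A i j.

Lemma pow_m1 j : pow (-1) j = (-1) ^+ j :> R.
Proof. elim: j => [|j IH] //=. by rewrite exprS IH. Qed.

Lemma det_bridge n (A : mat) : det n A = \det (mxof n A).
Proof.
elim: n A => [|n IH] A; first by rewrite /= det_mx00.
rewrite det_S (expand_det_row _ ord0) sumR_big; apply: eq_bigr => j _.
rewrite /cofactor IH mxE /= add0n pow_m1.
rewrite !RmultE mulrA [A 0%N j * _]mulrC; congr (_ * _).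
congr (\det _); apply/matrixP => a b; rewrite !mxE /minor /= /bump.
congr (A _ _). case: ltnP => h; rewrite ?add0n ?add1n //.
- by have -> : (b <? j)%nat = true by apply/Nat.ltb_lt/ltP.
- by have -> : (b <? j)%nat = false by apply/Nat.ltb_ge/leP.
Qed.

Definition Pinv n (A : mat) (t l : nat) : R := invmx (mxof n.+1 A) (inord t) (inord l).

Lemma inv_exists_mc n (A : mat) : det n.+1 A <> 0 ->
  forall t j, lt t (S n) -> lt j (S n) ->
  sumR n.+1 (fun l => Pinv n A t l * A l j) = if Nat.eqb t j then 1 else 0.
Proof.
move=> hd t j /ltP ht /ltP hj.
have hu : mxof n.+1 A \in unitmx by rewrite unitmxE unitfE -det_bridge; apply/eqP.
rewrite sumR_big.
transitivity ((invmx (mxof n.+1 A) *m mxof n.+1 A) (inord t) (inord j)).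
  rewrite mxE; apply: eq_bigr => l _. rewrite /Pinv inord_val !mxE inordK //.
rewrite (mulVmx hu) mxE.
have -> : (inord t == inord j :> 'I_n.+1) = Nat.eqb t j.
  case: (Nat.eqb_spec t j) => [->|ne]; first by rewrite eqxx.
  apply/eqP => /(congr1 val); rewrite /= !inordK //.
by case: (Nat.eqb t j).
Qed.
End Br.

Lemma inv_exists n (A : mat) : det n A <> 0 ->
  exists P : mat, forall t j, (t < n)%nat -> (j < n)%nat ->
   sumR n (fun l => P t l * A l j) = if Nat.eqb t j then 1 else 0.
Proof.
intros hd. destruct n as [|n].
- exists (fun _ _ => 0). intros; lia.
- exists (Br.Pinv n A).
  intros t j ht hj. apply Br.inv_exists_mc; auto.
Qed.


Lemma sumR_ext m f g : (forall l, (l < m)%nat -> f l = g l) -> sumR m f = sumR m g.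
Proof. induction m; simpl; intros H; auto. rewrite IHm by (intros; apply H; lia). rewrite H by lia. auto. Qed.

Lemma sumR_0 m : sumR m (fun _ => 0) = 0.
Proof. induction m; simpl; auto. rewrite IHm; ring. Qed.

Lemma sumR_plus m f g : sumR m (fun l => f l + g l) = sumR m f + sumR m g.
Proof. induction m; simpl; [ring|]. rewrite IHm; ring. Qed.

Lemma sumR_minus m f g : sumR m (fun l => f l - g l) = sumR m f - sumR m g.
Proof. induction m; simpl; [ring|]. rewrite IHm; ring. Qed.

Lemma sumR_scal m c f : sumR m (fun l => c * f l) = c * sumR m f.
Proof. induction m; simpl; [ring|]. rewrite IHm; ring. Qed.

Lemma sumR_scalr m c f : sumR m (fun l => f l * c) = sumR m f * c.
Proof. induction m; simpl; [ring|]. rewrite IHm; ring. Qed.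

Lemma sumR_swap m p F : sumR m (fun l => sumR p (F l)) = sumR p (fun q => sumR m (fun l => F l q)).
Proof.
induction m; simpl.
- rewrite sumR_0; auto.
- rewrite IHm. rewrite <- sumR_plus. auto.
Qed.

Lemma sumR_add m1 m2 f : sumR (m1 + m2) f = sumR m1 f + sumR m2 (fun l => f (m1 + l)%nat).
Proof. induction m2; simpl. rewrite Nat.add_0_r; ring. rewrite Nat.add_succ_r; simpl. rewrite IHm2; ring. Qed.

Lemma sumR_kron m t f : (t < m)%nat -> sumR m (fun l => if Nat.eqb l t then f l else 0) = f t.
Proof.
induction m; intros H; [lia|]. simpl.
destruct (Nat.eq_dec t m).
- subst. rewrite Nat.eqb_refl. rewrite (sumR_ext _ _ (fun _ => 0)). rewrite sumR_0; ring.
  intros l hl. destruct (Nat.eqb_spec l m); auto; lia.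
- rewrite IHm by lia. destruct (Nat.eqb_spec m t); [lia|ring].
Qed.

Lemma sumR_kron' m t f : (t < m)%nat -> sumR m (fun l => if Nat.eqb t l then f l else 0) = f t.
Proof.
intros H. rewrite <- (sumR_kron m t f H). apply sumR_ext. intros l _. rewrite Nat.eqb_sym; auto.
Qed.

Definition sk (l0 l : nat) : nat := if (l <? l0)%nat then l else S l.

Lemma sumR_skip m l0 f : (l0 < m)%nat -> sumR m f = sumR (m - 1) (fun q => f (sk l0 q)) + f l0.
Proof.
induction m; intros H; [lia|].
simpl sumR at 1. replace (S m - 1)%nat with m by lia.
destruct (Nat.eq_dec l0 m).
- subst. f_equal. apply sumR_ext. intros l hl. unfold sk. destruct (Nat.ltb_spec l m); auto; lia.
- rewrite IHm by lia. destruct m; [lia|]. simpl (S m - 1)%nat. replace (m - 0)%nat with m by lia.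
  simpl sumR at 2. replace (sk l0 m) with (S m) by (unfold sk; destruct (Nat.ltb_spec m l0); lia). ring.
Qed.

Lemma sumR_le m f g : (forall l, (l < m)%nat -> f l <= g l) -> sumR m f <= sumR m g.
Proof. induction m; simpl; intros; [lra|]. specialize (IHm (fun l h => H l ltac:(lia))). specialize (H m ltac:(lia)). lra. Qed.

Lemma sumR_nonneg m f : (forall l, (l < m)%nat -> 0 <= f l) -> 0 <= sumR m f.
Proof. intros. rewrite <- (sumR_0 m). apply sumR_le; auto. Qed.

Lemma sumR_abs m f : Rabs (sumR m f) <= sumR m (fun l => Rabs (f l)).
Proof. induction m; simpl. rewrite Rabs_R0; lra. eapply Rle_trans. apply Rabs_triang. lra. Qed.

Lemma sumR_term_le m f l : (forall q, (q < m)%nat -> 0 <= f q) -> (l < m)%nat -> f l <= sumR m f.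
Proof.
induction m; intros H hl; [lia|]. simpl.
destruct (Nat.eq_dec l m).
- subst. pose proof (sumR_nonneg m f (fun q h => H q ltac:(lia))). lra.
- pose proof (IHm (fun q h => H q ltac:(lia)) ltac:(lia)). pose proof (H m ltac:(lia)). lra.
Qed.

Lemma homog r : forall m (a : nat -> nat -> R), (r < m)%nat ->
  exists c, (exists l, (l < m)%nat /\ c l <> 0) /\
    forall p, (p < r)%nat -> sumR m (fun l => c l * a l p) = 0.
Proof.
induction r; intros m a hm.
- exists (fun _ => 1). split. exists O. split; [lia|lra]. intros; lia.
- destruct (classic (exists l0, (l0 < m)%nat /\ a l0 r <> 0)) as [[l0 [hl0 hne]]|hno].
  + set (a' := fun q p => a (sk l0 q) p - a (sk l0 q) r / a l0 r * a l0 p).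
    destruct (IHr (m - 1)%nat a' ltac:(lia)) as [c' [[l1 [hl1 hc1]] hc']].
    set (c := fun l => if Nat.eqb l l0 then - (sumR (m - 1) (fun q => c' q * a (sk l0 q) r)) / a l0 r
                       else c' (if (l <? l0)%nat then l else (l - 1)%nat)).
    assert (hcsk : forall q, c (sk l0 q) = c' q).
    { intros q. unfold c, sk. destruct (Nat.ltb_spec q l0).
      - destruct (Nat.eqb_spec q l0); [lia|]. destruct (Nat.ltb_spec q l0); [auto|lia].
      - destruct (Nat.eqb_spec (S q) l0); [lia|]. destruct (Nat.ltb_spec (S q) l0); [lia|]. f_equal; lia. }
    exists c. split.
    * exists (sk l0 l1). split. unfold sk; destruct (Nat.ltb_spec l1 l0); lia. rewrite hcsk; auto.
    * intros p hp. rewrite (sumR_skip m l0) by auto.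
      rewrite (sumR_ext _ _ (fun q => c' q * a (sk l0 q) p)) by (intros; rewrite hcsk; auto).
      assert (hcl0 : c l0 = - (sumR (m - 1) (fun q => c' q * a (sk l0 q) r)) / a l0 r).
      { unfold c. rewrite Nat.eqb_refl. auto. }
      rewrite hcl0.
      destruct (Nat.eq_dec p r).
      { subst. field. auto. }
      specialize (hc' p ltac:(lia)). unfold a' in hc'.
      rewrite (sumR_ext _ _ (fun q => c' q * a (sk l0 q) p - (c' q * a (sk l0 q) r) * (a l0 p / a l0 r))) in hc'
        by (intros; field; auto).
      rewrite sumR_minus, sumR_scalr in hc'.
      replace (- sumR (m - 1) (fun q : nat => c' q * a (sk l0 q) r) / a l0 r * a l0 p)
        with (- (sumR (m - 1) (fun q : nat => c' q * a (sk l0 q) r) * (a l0 p / a l0 r))) by (field; auto).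
      lra.
  + destruct (IHr m a ltac:(lia)) as [c [hc1 hc2]].
    exists c. split; auto. intros p hp. destruct (Nat.eq_dec p r).
    * subst. rewrite (sumR_ext _ _ (fun _ => 0)). apply sumR_0.
      intros l hl. destruct (Req_dec (a l r) 0) as [e|e]. rewrite e; ring. exfalso; apply hno; eauto.
    * apply hc2; lia.
Qed.

Definition indepR (n m : nat) (X : nat -> nat -> R) : Prop :=
  forall c : nat -> R,
    (forall t, (t < n)%nat -> sumR m (fun l => c l * X l t) = 0) ->
    forall l, (l < m)%nat -> c l = 0.

Lemma steinitz n m r (X Y a : nat -> nat -> R) :
  indepR n m X ->
  (forall l t, (l < m)%nat -> (t < n)%nat -> X l t = sumR r (fun p => a l p * Y p t)) ->
  (m <= r)%nat.
Proof.
intros hind hX. destruct (le_lt_dec m r) as [h|h]; auto. exfalso.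
destruct (homog r m a h) as [c [[l [hl hc]] hc2]].
apply hc. apply (hind c); auto.
intros t ht.
rewrite (sumR_ext _ _ (fun l => sumR r (fun p => c l * a l p * Y p t))).
2:{ intros q hq. rewrite hX by auto. rewrite <- sumR_scal. apply sumR_ext; intros; ring. }
rewrite sumR_swap. rewrite (sumR_ext _ _ (fun _ => 0)). apply sumR_0.
intros p hp. rewrite sumR_scalr. rewrite hc2 by auto. ring.
Qed.

Lemma indep_le_n n m X : indepR n m X -> (m <= n)%nat.
Proof.
intros h. apply (steinitz n m n X (fun p t => if Nat.eqb p t then 1 else 0) X h).
intros l t hl ht. rewrite (sumR_ext _ _ (fun p => if Nat.eqb t p then X l p else 0)).
rewrite sumR_kron' by auto. auto.
intros p hp. destruct (Nat.eqb_spec p t); destruct (Nat.eqb_spec t p); subst; try lia; ring.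
Qed.

Definition inspan (n : nat) (T : vecZ -> Prop) (x : vecR) : Prop :=
  exists (m : nat) (w : nat -> vecZ) (c : nat -> R),
    (forall l, (l < m)%nat -> T (w l)) /\
    forall t, (t < n)%nat -> x t = sumR m (fun l => c l * IZR (w l t)).

Lemma inspan_mono n (T T' : vecZ -> Prop) x : (forall v, T v -> T' v) -> inspan n T x -> inspan n T' x.
Proof. intros h [m [w [c [h1 h2]]]]. exists m, w, c. split; auto. Qed.

Lemma inspan_ext n T x y : (forall t, (t < n)%nat -> x t = y t) -> inspan n T x -> inspan n T y.
Proof. intros h [m [w [c [h1 h2]]]]. exists m, w, c. split; auto. intros t ht. rewrite <- h; auto. Qed.

Lemma inspan_mem n (T : vecZ -> Prop) v : T v -> inspan n T (fun t => IZR (v t)).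
Proof. intros h. exists 1%nat, (fun _ => v), (fun _ => 1). split. intros; auto. intros; simpl; ring. Qed.

Lemma inspan_zero n T : inspan n T (fun _ => 0).
Proof. exists O, (fun _ _ => 0%Z), (fun _ => 0). split. intros; lia. intros; simpl; auto. Qed.

Lemma inspan_scal n T a x : inspan n T x -> inspan n T (fun t => a * x t).
Proof.
intros [m [w [c [h1 h2]]]]. exists m, w, (fun l => a * c l). split; auto.
intros t ht. rewrite h2 by auto. rewrite <- sumR_scal. apply sumR_ext; intros; ring.
Qed.

Lemma inspan_add n T x y : inspan n T x -> inspan n T y -> inspan n T (fun t => x t + y t).
Proof.
intros [m1 [w1 [c1 [h1 h2]]]] [m2 [w2 [c2 [g1 g2]]]].
exists (m1 + m2)%nat, (fun l => if (l <? m1)%nat then w1 l else w2 (l - m1)%nat),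
  (fun l => if (l <? m1)%nat then c1 l else c2 (l - m1)%nat).
split.
- intros l hl. destruct (Nat.ltb_spec l m1); auto. apply g1; lia.
- intros t ht. rewrite sumR_add. rewrite h2, g2 by auto. f_equal.
  + apply sumR_ext; intros l hl. destruct (Nat.ltb_spec l m1); auto; lia.
  + apply sumR_ext; intros l hl. destruct (Nat.ltb_spec (m1 + l) m1); [lia|].
    replace (m1 + l - m1)%nat with l by lia. auto.
Qed.

Lemma inspan_sum n T m (c : nat -> R) (X : nat -> vecR) :
  (forall l, (l < m)%nat -> inspan n T (X l)) -> inspan n T (fun t => sumR m (fun l => c l * X l t)).
Proof.
induction m; intros h; simpl.
- apply inspan_zero.
- apply inspan_add. apply IHm; intros; apply h; lia. apply inspan_scal. apply h; lia.
Qed.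

Lemma fchoice {A : Type} (P : nat -> A -> Prop) m (a0 : A) :
  (forall l, (l < m)%nat -> exists a, P l a) -> exists f, forall l, (l < m)%nat -> P l (f l).
Proof.
induction m; intros h.
- exists (fun _ => a0). intros; lia.
- destruct IHm as [f hf]. intros; apply h; lia.
  destruct (h m ltac:(lia)) as [a ha].
  exists (fun l => if Nat.eqb l m then a else f l). intros l hl.
  destruct (Nat.eqb_spec l m). subst; auto. apply hf; lia.
Qed.

Lemma restrict_indep n a b w : (a <= b)%nat -> lin_indep n b w -> lin_indep n a w.
Proof.
intros hab h c hc l hl.
set (c' := fun l => if (l <? a)%nat then c l else 0).
assert (c' l = 0). { apply (h c'); [|lia].
  intros t ht. replace b with (a + (b - a))%nat by lia. rewrite sumR_add.
  rewrite (sumR_ext (b - a) _ (fun _ => 0)). rewrite sumR_0, Rplus_0_r.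
  rewrite <- (hc t ht). apply sumR_ext. intros q hq. unfold c'. destruct (Nat.ltb_spec q a); auto; lia.
  intros q hq. unfold c'. destruct (Nat.ltb_spec (a + q) a); [lia|ring]. }
unfold c' in H. destruct (Nat.ltb_spec l a); auto; lia.
Qed.

Definition wext (w : nat -> vecZ) (j : nat) (u : vecZ) : nat -> vecZ :=
  fun l => if (l <? j)%nat then w l else u.

Lemma indep_ext n j w u : lin_indep n j w ->
  ~ (exists d : nat -> R, forall t, (t < n)%nat -> IZR (u t) = sumR j (fun l => d l * IZR (w l t))) ->
  lin_indep n (S j) (wext w j u).
Proof.
intros h hn c hc.
assert (hw : forall t, (t < n)%nat -> sumR j (fun l => c l * IZR (wext w j u l t)) = sumR j (fun l => c l * IZR (w l t))).
{ intros t ht. apply sumR_ext. intros l hl. unfold wext. destruct (Nat.ltb_spec l j); auto; lia. }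
assert (hu : forall t, wext w j u j t = u t). { intros t. unfold wext. destruct (Nat.ltb_spec j j); auto; lia. }
assert (cj : c j = 0).
{ destruct (Req_dec (c j) 0) as [e|e]; auto. exfalso. apply hn.
  exists (fun l => - c l / c j). intros t ht. specialize (hc t ht). simpl in hc.
  rewrite hw, hu in hc by auto.
  rewrite (sumR_ext _ _ (fun l => c l * IZR (w l t) * (- / c j))) by (intros; field; auto).
  rewrite sumR_scalr. replace (sumR j (fun l => c l * IZR (w l t))) with (- (c j * IZR (u t))) by lra.
  field; auto. }
intros l hl. destruct (Nat.eq_dec l j). subst; auto.
apply (h c); [|lia]. intros t ht. specialize (hc t ht). simpl in hc. rewrite hw, hu, cj in hc by auto. lra.
Qed.

Lemma exists_max (P : nat -> Prop) N : P O -> ~ P (S N) -> exists r, P r /\ ~ P (S r).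
Proof.
intros h0 hN. apply NNPP. intros hn. apply hN.
assert (forall r, P r). { induction r; auto. apply NNPP. intros hr. apply hn. exists r; auto. }
auto.
Qed.

Lemma rank_lemma n (T : vecZ -> Prop) m (x : nat -> vecZ) :
  lin_indep n m x -> (forall l, (l < m)%nat -> inspan n T (fun t => IZR (x l t))) ->
  exists w, lin_indep n m w /\ forall l, (l < m)%nat -> T (w l).
Proof.
intros hx hsp.
set (P := fun r => exists w, lin_indep n r w /\ forall l, (l < r)%nat -> T (w l)).
destruct (exists_max P n) as [r [[y [hy hyT]] hr]].
- exists (fun _ _ => 0%Z). split. intros c _ l hl; lia. intros; lia.
- intros [w [hw _]]. pose proof (indep_le_n n (S n) _ hw). lia.
- assert (hsp2 : forall v, T v -> exists d : nat -> R, forall t, (t < n)%nat -> IZR (v t) = sumR r (fun l => d l * IZR (y l t))).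
  { intros v hv. apply NNPP. intros hn. apply hr. exists (wext y r v). split.
    apply indep_ext; auto. intros l hl. unfold wext. destruct (Nat.ltb_spec l r); auto. }
  assert (hco : forall l, (l < m)%nat -> exists a : nat -> R, forall t, (t < n)%nat ->
      IZR (x l t) = sumR r (fun p => a p * IZR (y p t))).
  { intros l hl. destruct (hsp l hl) as [m' [w [c [h1 h2]]]].
    destruct (fchoice (fun q d => forall t, (t < n)%nat -> IZR (w q t) = sumR r (fun l => d l * IZR (y l t))) m' (fun _ => 0))
      as [d hd]. intros q hq. apply hsp2; auto.
    exists (fun p => sumR m' (fun q => c q * d q p)). intros t ht. rewrite h2 by auto.
    rewrite (sumR_ext _ _ (fun q => sumR r (fun p => c q * d q p * IZR (y p t)))).
    rewrite sumR_swap. apply sumR_ext. intros p hp. rewrite sumR_scalr. auto.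
    intros q hq. rewrite hd by auto. rewrite <- sumR_scal. apply sumR_ext; intros; ring. }
  destruct (fchoice (fun l a => forall t, (t < n)%nat -> IZR (x l t) = sumR r (fun p => a p * IZR (y p t))) m (fun _ => 0) hco)
    as [a ha].
  assert (m <= r)%nat.
  { apply (steinitz n m r (fun l t => IZR (x l t)) (fun p t => IZR (y p t)) a); auto. }
  exists y. split. apply (restrict_indep n m r); auto. intros l hl; apply hyT; lia.
Qed.

Lemma normAv_nonneg n M v : 0 <= normAv n M v.
Proof. apply sqrt_pos. Qed.

Lemma sumsq_nonneg n (f : nat -> R) : 0 <= sumR n (fun i => f i ^ 2).
Proof. apply sumR_nonneg. intros; nra. Qed.

Lemma normAv_sq n M v : normAv n M v ^ 2 = sumR n (fun i => (matvec n M v i) ^ 2).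
Proof. unfold normAv. rewrite <- Rsqr_pow2. apply Rsqr_sqrt. apply sumsq_nonneg. Qed.

Lemma matvec_le_norm n M v l : (l < n)%nat -> Rabs (matvec n M v l) <= normAv n M v.
Proof.
intros hl. apply Rsqr_incr_0_var; [|apply normAv_nonneg].
rewrite <- Rsqr_abs. rewrite !Rsqr_pow2. rewrite normAv_sq.
apply (sumR_term_le n (fun i => matvec n M v i ^ 2)); auto. intros; nra.
Qed.

Lemma normAv_ext n M v v' : (forall t, (t < n)%nat -> v t = v' t) -> normAv n M v = normAv n M v'.
Proof.
intros h. unfold normAv. f_equal. apply sumR_ext. intros i hi. f_equal. unfold matvec.
apply sumR_ext. intros j hj. rewrite h; auto.
Qed.

Lemma normAv_ext_mat n M M' : (forall i j, (i < n)%nat -> (j < n)%nat -> M i j = M' i j) ->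
  forall v, normAv n M v = normAv n M' v.
Proof.
intros h v. unfold normAv. f_equal. apply sumR_ext. intros i hi. f_equal. unfold matvec.
apply sumR_ext. intros j hj. rewrite h; auto.
Qed.

Lemma matvec_mul n Q M v i : matvec n (mat_mul n Q M) v i = sumR n (fun l => Q i l * matvec n M v l).
Proof.
unfold matvec, mat_mul.
rewrite (sumR_ext _ _ (fun j => sumR n (fun l => Q i l * (M l j * IZR (v j))))).
rewrite sumR_swap. apply sumR_ext. intros l hl. rewrite sumR_scal. auto.
intros j hj. rewrite <- sumR_scalr. apply sumR_ext; intros; ring.
Qed.

Lemma sq_sum m (f : nat -> R) : (sumR m f) ^ 2 = sumR m (fun l => sumR m (fun q => f l * f q)).
Proof.
replace ((sumR m f) ^ 2) with (sumR m f * sumR m f) by ring.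
rewrite <- sumR_scalr. apply sumR_ext. intros l hl. rewrite sumR_scal. auto.
Qed.

Lemma normAv_orth n Q M v : SO n Q -> normAv n (mat_mul n Q M) v = normAv n M v.
Proof.
intros [_ hQ]. unfold normAv. f_equal.
set (y := matvec n M v).
rewrite (sumR_ext _ _ (fun i => sumR n (fun l => sumR n (fun q => Q i l * Q i q * (y l * y q))))).
2:{ intros i hi. rewrite matvec_mul. rewrite sq_sum. apply sumR_ext; intros. apply sumR_ext; intros. unfold y; ring. }
rewrite sumR_swap. apply sumR_ext. intros l hl. rewrite sumR_swap.
rewrite (sumR_ext _ _ (fun q => if Nat.eqb l q then y l * y q else 0)).
rewrite sumR_kron' by auto. ring.
intros q hq. rewrite sumR_scalr. rewrite hQ by auto. destruct (Nat.eqb l q); ring.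
Qed.

Definition Snorm (n : nat) (v : vecZ) : R := sumR n (fun t => Rabs (IZR (v t))).

Definition good (n : nat) (M : mat) (C : R) : Prop :=
  0 <= C /\ forall v, Snorm n v <= C * normAv n M v.

Lemma Snorm_nonneg n v : 0 <= Snorm n v.
Proof. apply sumR_nonneg. intros; apply Rabs_pos. Qed.

Lemma recover n (A P : mat) v t :
  (forall t j, (t < n)%nat -> (j < n)%nat -> sumR n (fun l => P t l * A l j) = if Nat.eqb t j then 1 else 0) ->
  (t < n)%nat -> IZR (v t) = sumR n (fun l => P t l * matvec n A v l).
Proof.
intros hP ht. unfold matvec.
rewrite (sumR_ext _ _ (fun l => sumR n (fun j => P t l * A l j * IZR (v j)))).
rewrite sumR_swap.
rewrite (sumR_ext _ _ (fun j => if Nat.eqb t j then IZR (v j) else 0)).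
rewrite sumR_kron' by auto. auto.
intros j hj. rewrite sumR_scalr. rewrite hP by auto. destruct (Nat.eqb t j); ring.
intros l hl. rewrite <- sumR_scal. apply sumR_ext; intros; ring.
Qed.

Definition Psum (n : nat) (P : mat) : R := sumR n (fun t => sumR n (fun l => Rabs (P t l))).

Lemma Psum_nonneg n P : 0 <= Psum n P.
Proof. apply sumR_nonneg; intros; apply sumR_nonneg; intros; apply Rabs_pos. Qed.

Lemma matvec_diff n A B v l : (l < n)%nat -> forall eps, (forall j, (j < n)%nat -> Rabs (B l j - A l j) <= eps) ->
  Rabs (matvec n B v l - matvec n A v l) <= eps * Snorm n v.
Proof.
intros hl eps h. unfold matvec, Snorm. rewrite <- sumR_minus.
eapply Rle_trans. apply sumR_abs. rewrite <- sumR_scal. apply sumR_le. intros j hj.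
replace (B l j * IZR (v j) - A l j * IZR (v j)) with ((B l j - A l j) * IZR (v j)) by ring.
rewrite Rabs_mult. apply Rmult_le_compat_r. apply Rabs_pos. auto.
Qed.

Lemma good_B n (A B P : mat) eps :
  (forall t j, (t < n)%nat -> (j < n)%nat -> sumR n (fun l => P t l * A l j) = if Nat.eqb t j then 1 else 0) ->
  (forall i j, (i < n)%nat -> (j < n)%nat -> Rabs (B i j - A i j) <= eps) ->
  Psum n P * eps <= / 2 -> good n B (2 * Psum n P).
Proof.
intros hP hB heps. split. pose proof (Psum_nonneg n P); lra.
intros v.
assert (ht : forall t, (t < n)%nat -> Rabs (IZR (v t)) <= sumR n (fun l => Rabs (P t l)) * (normAv n B v + eps * Snorm n v)).
{ intros t ht. rewrite (recover n A P v t hP ht). eapply Rle_trans. apply sumR_abs.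
  rewrite <- sumR_scalr. apply sumR_le. intros l hl. rewrite Rabs_mult.
  apply Rmult_le_compat_l. apply Rabs_pos.
  pose proof (matvec_diff n A B v l hl eps (fun j hj => hB l j hl hj)).
  pose proof (matvec_le_norm n B v l hl).
  pose proof (Rabs_triang_inv (matvec n B v l) (matvec n A v l)).
  rewrite Rabs_minus_sym in H. 
  pose proof (Rabs_triang (matvec n A v l - matvec n B v l) (matvec n B v l)).
  replace (matvec n A v l - matvec n B v l + matvec n B v l) with (matvec n A v l) in H2 by ring.
  lra. }
assert (hS : Snorm n v <= Psum n P * (normAv n B v + eps * Snorm n v)).
{ unfold Snorm at 1, Psum. rewrite <- sumR_scalr. apply sumR_le. auto. }
pose proof (Snorm_nonneg n v). pose proof (normAv_nonneg n B v). pose proof (Psum_nonneg n P).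
nra.
Qed.

Lemma good_A n (A P : mat) :
  (forall t j, (t < n)%nat -> (j < n)%nat -> sumR n (fun l => P t l * A l j) = if Nat.eqb t j then 1 else 0) ->
  good n A (2 * Psum n P).
Proof.
intros hP. apply (good_B n A A P 0); auto.
intros. replace (A i j - A i j) with 0 by ring. rewrite Rabs_R0; lra.
rewrite Rmult_0_r. lra.
Qed.

Lemma sumR_const m c : sumR m (fun _ => c) = INR m * c.
Proof. induction m; simpl sumR. simpl; ring. rewrite IHm, S_INR; ring. Qed.

Lemma matvec_bound n A v l : (l < n)%nat -> Rabs (matvec n A v l) <= Psum n A * Snorm n v.
Proof.
intros hl. pose proof (matvec_diff n A (fun _ _ => 0) v l hl (Psum n A)) as h.
replace (matvec n (fun _ _ => 0) v l) with 0 in h.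
rewrite Rminus_0_l, Rabs_Ropp in h. apply h.
intros j hj. rewrite Rminus_0_l, Rabs_Ropp. unfold Psum.
eapply Rle_trans; [|apply (sumR_term_le n _ l)]; auto.
apply (sumR_term_le n (fun j => Rabs (A l j))); auto. intros; apply Rabs_pos.
intros; apply sumR_nonneg; intros; apply Rabs_pos.
unfold matvec. rewrite (sumR_ext _ _ (fun _ => 0)). rewrite sumR_0; auto. intros; ring.
Qed.

Lemma approx n A eta R0 : 0 < eta -> 0 <= R0 -> exists eps, 0 < eps /\
  forall B, (forall i j, (i < n)%nat -> (j < n)%nat -> Rabs (B i j - A i j) <= eps) ->
  forall v, Snorm n v <= R0 -> Rabs (normAv n B v - normAv n A v) < eta.
Proof.
intros heta hR.
set (al := Psum n A). assert (hal : 0 <= al) by apply Psum_nonneg.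
set (K := INR n * (R0 * (R0 + 2 * al * R0))).
assert (hK : 0 <= K). { unfold K. apply Rmult_le_pos. apply pos_INR. nra. }
exists (Rmin 1 (eta ^ 2 / (K + 1))). split.
{ apply Rmin_pos. lra. apply Rdiv_lt_0_compat. nra. lra. }
intros B hB v hv.
set (eps := Rmin 1 (eta ^ 2 / (K + 1))) in *.
assert (he1 : eps <= 1) by apply Rmin_l.
assert (he2 : eps <= eta ^ 2 / (K + 1)) by apply Rmin_r.
assert (he0 : 0 < eps). { apply Rmin_pos. lra. apply Rdiv_lt_0_compat. nra. lra. }
assert (hsq : Rabs (normAv n B v ^ 2 - normAv n A v ^ 2) <= eps * K).
{ rewrite !normAv_sq. rewrite <- sumR_minus. eapply Rle_trans. apply sumR_abs.
  unfold K. rewrite <- sumR_const. rewrite <- sumR_scal. apply sumR_le. intros l hl.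
  pose proof (matvec_diff n A B v l hl eps (fun j hj => hB l j hl hj)) as h1.
  pose proof (matvec_bound n A v l hl) as h2. fold al in h2.
  replace (matvec n B v l ^ 2 - matvec n A v l ^ 2) with
    ((matvec n B v l - matvec n A v l) * ((matvec n B v l - matvec n A v l) + 2 * matvec n A v l)) by ring.
  rewrite Rabs_mult.
  pose proof (Rabs_triang (matvec n B v l - matvec n A v l) (2 * matvec n A v l)).
  rewrite Rabs_mult in H. rewrite (Rabs_right 2) in H by lra.
  pose proof (Snorm_nonneg n v).
  assert (Rabs (matvec n B v l - matvec n A v l) <= eps * R0) by nra.
  assert (Rabs (matvec n B v l - matvec n A v l + 2 * matvec n A v l) <= R0 + 2 * al * R0) by nra.
  replace (eps * (R0 * (R0 + 2 * al * R0))) with ((eps * R0) * (R0 + 2 * al * R0)) by ring.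
  apply Rmult_le_compat; try apply Rabs_pos; auto. }
assert (hlt : eps * K < eta ^ 2).
{ apply Rle_lt_trans with (eta ^ 2 / (K + 1) * K). apply Rmult_le_compat_r; auto.
  unfold Rdiv. replace (eta ^ 2 * / (K + 1) * K) with (eta ^ 2 * (K / (K + 1))) by (field; lra).
  assert (K / (K + 1) < 1). { apply Rmult_lt_reg_r with (K + 1). lra. unfold Rdiv. rewrite Rmult_assoc, Rinv_l by lra. lra. }
  assert (0 < eta ^ 2) by (apply pow_lt; lra).
  rewrite <- (Rmult_1_r (eta ^ 2)) at 2. apply Rmult_lt_compat_l; auto. }
pose proof (normAv_nonneg n B v). pose proof (normAv_nonneg n A v).
set (x := normAv n B v) in *. set (y := normAv n A v) in *.
assert (Rabs (x - y) * Rabs (x - y) <= Rabs (x ^ 2 - y ^ 2)).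
{ replace (x ^ 2 - y ^ 2) with ((x - y) * (x + y)) by ring. rewrite Rabs_mult.
  apply Rmult_le_compat_l. apply Rabs_pos. rewrite (Rabs_right (x + y)) by lra.
  unfold Rabs; destruct (Rcase_abs (x - y)); lra. }
assert (Rabs (x - y) * Rabs (x - y) < eta * eta) by nra.
pose proof (Rabs_pos (x - y)). nra.
Qed.

Definition zlist (K : nat) : list Z := map (fun i => (Z.of_nat i - Z.of_nat K)%Z) (seq 0 (2 * K + 1)).

Lemma zlist_in K z : (Z.abs z <= Z.of_nat K)%Z -> In z (zlist K).
Proof.
intros h. unfold zlist. apply in_map_iff. exists (Z.to_nat (z + Z.of_nat K)). split.
rewrite Z2Nat.id by lia. lia. apply in_seq. lia.
Qed.

Fixpoint box (n K : nat) : list vecZ :=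
  match n with
  | O => (fun _ => 0%Z) :: nil
  | S n' => flat_map (fun v => map (fun z => fun t => if Nat.eqb t n' then z else v t) (zlist K)) (box n' K)
  end.

Lemma box_in n K v : (forall t, (t < n)%nat -> (Z.abs (v t) <= Z.of_nat K)%Z) ->
  exists u, In u (box n K) /\ forall t, (t < n)%nat -> u t = v t.
Proof.
revert v. induction n; intros v h.
- exists (fun _ => 0%Z). split. simpl; auto. intros; lia.
- destruct (IHn v) as [u [hu hu2]]. intros; apply h; lia.
  exists (fun t => if Nat.eqb t n then v n else u t). split.
  + simpl. apply in_flat_map. exists u. split; auto. apply in_map_iff. exists (v n). split; auto.
    apply zlist_in. apply h; lia.
  + intros t ht. destruct (Nat.eqb_spec t n). subst; auto. apply hu2; lia.
Qed.

Lemma list_gap (L : list R) x : exists d, 0 < d /\ forall y, In y L -> ~ (x < y < x + d).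
Proof.
induction L as [|y0 L IH].
- exists 1. split. lra. intros y h; inversion h.
- destruct IH as [d [hd h]].
  destruct (Rlt_dec x y0).
  + exists (Rmin d (y0 - x)). split. apply Rmin_pos; lra.
    intros y [e|hy]. subst. pose proof (Rmin_r d (y - x)). lra.
    intros hh. apply (h y hy). pose proof (Rmin_l d (y0 - x)). lra.
  + exists d. split; auto. intros y [e|hy]. subst; lra. auto.
Qed.

Lemma gap n M C x : good n M C -> exists d, 0 < d /\ forall v, ~ (x < normAv n M v < x + d).
Proof.
intros [hC hg].
set (u := up (C * (Rabs x + 1))).
set (K := Z.to_nat u).
destruct (list_gap (map (normAv n M) (box n K)) x) as [d [hd hL]].
exists (Rmin d 1). split. apply Rmin_pos; lra.
intros v hv. pose proof (Rmin_l d 1). pose proof (Rmin_r d 1).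
assert (hb : forall t, (t < n)%nat -> (Z.abs (v t) <= Z.of_nat K)%Z).
{ intros t ht.
  assert (h1 : Rabs (IZR (v t)) <= C * (Rabs x + 1)).
  { eapply Rle_trans. apply (sumR_term_le n (fun t => Rabs (IZR (v t)))); auto. intros; apply Rabs_pos.
    fold (Snorm n v). eapply Rle_trans. apply hg. apply Rmult_le_compat_l; auto.
    pose proof (Rle_abs x). lra. }
  rewrite <- abs_IZR in h1. pose proof (archimed (C * (Rabs x + 1))) as [ha _]. fold u in ha.
  assert (IZR (Z.abs (v t)) < IZR u) by lra. apply lt_IZR in H1.
  unfold K. rewrite Z2Nat.id by lia. lia. }
destruct (box_in n K v hb) as [w [hw hw2]].
apply (hL (normAv n M w)). apply in_map; auto.
rewrite (normAv_ext n M w v hw2). lra.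
Qed.

Lemma inf_exists (S : R -> Prop) : (exists r, S r) -> (forall r, S r -> 0 <= r) -> exists s, is_inf S s.
Proof.
intros [r0 h0] hpos.
destruct (completeness (fun y => S (- y))) as [m [hm1 hm2]].
- exists 0. intros y hy. specialize (hpos _ hy). lra.
- exists (- r0). rewrite Ropp_involutive. auto.
- exists (- m). split.
  + intros r hr. assert (- r <= m). apply hm1. rewrite Ropp_involutive; auto. lra.
  + intros b hb. assert (m <= - b). apply hm2. intros y hy. specialize (hb _ hy). lra. lra.
Qed.

Definition ebasis (l : nat) : vecZ := fun t => if Nat.eqb l t then 1%Z else 0%Z.

Lemma ebasis_indep n j : (j <= n)%nat -> lin_indep n j ebasis.
Proof.
intros hj c hc l hl. specialize (hc l ltac:(lia)).
rewrite (sumR_ext _ _ (fun q => if Nat.eqb q l then c q else 0)) in hc.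
rewrite sumR_kron in hc by auto. auto.
intros q hq. unfold ebasis. destruct (Nat.eqb_spec q l); simpl; ring.
Qed.

Lemma syst_set_nonempty n M j : (j <= n)%nat -> exists r, syst_set n M j r.
Proof.
intros hj. exists (1 + sumR j (fun l => normAv n M (ebasis l))). split.
- pose proof (sumR_nonneg j (fun l => normAv n M (ebasis l)) (fun l _ => normAv_nonneg n M _)). lra.
- exists ebasis. split. apply ebasis_indep; auto. intros l hl.
  pose proof (sumR_term_le j (fun l => normAv n M (ebasis l)) l (fun l _ => normAv_nonneg n M _) hl). simpl in H. lra.
Qed.

Lemma syst_spec n M j : (j <= n)%nat -> is_inf (syst_set n M j) (syst n M j).
Proof.
intros hj. unfold syst. apply epsilon_spec.
apply inf_exists. apply syst_set_nonempty; auto. intros r [hr _]; lra.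
Qed.

Lemma syst_nonneg n M j : (j <= n)%nat -> 0 <= syst n M j.
Proof. intros hj. apply (syst_spec n M j hj). intros r [hr _]; lra. Qed.

Lemma syst_le_fam n M j w b : (j <= n)%nat -> lin_indep n j w ->
  (forall l, (l < j)%nat -> normAv n M (w l) <= b) -> 0 <= b -> syst n M j <= b.
Proof.
intros hj hw hb hb0. destruct (Rle_dec (syst n M j) b) as [h|h]; auto. exfalso.
set (r := (syst n M j + b) / 2).
assert (syst n M j <= r). { apply (syst_spec n M j hj). split. unfold r; lra. exists w. split; auto.
  intros l hl. specialize (hb l hl). unfold r; lra. }
unfold r in H. lra.
Qed.

Lemma syst_lt_fam n M j b : (j <= n)%nat -> syst n M j < b ->
  exists w, lin_indep n j w /\ forall l, (l < j)%nat -> normAv n M (w l) < b.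
Proof.
intros hj hb. apply NNPP. intros hn.
assert (b <= syst n M j). { apply (syst_spec n M j hj). intros r [hr [w [hw hw2]]].
  destruct (Rle_dec b r) as [h|h]; auto. exfalso. apply hn. exists w. split; auto.
  intros l hl. specialize (hw2 l hl). lra. }
lra.
Qed.

Lemma syst_mono n M a b : (a <= b)%nat -> (b <= n)%nat -> syst n M a <= syst n M b.
Proof.
intros hab hb. apply (syst_spec n M b hb). intros r [hr [w [hw hw2]]].
apply (syst_spec n M a ltac:(lia)). split; auto. exists w. split.
apply (restrict_indep n a b); auto. intros l hl; apply hw2; lia.
Qed.

Lemma syst_attained n M C j : good n M C -> (j <= n)%nat ->
  exists w, lin_indep n j w /\ forall l, (l < j)%nat -> normAv n M (w l) <= syst n M j.
Proof.
intros hg hj. destruct (gap n M C (syst n M j) hg) as [d [hd hgap]].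
destruct (syst_lt_fam n M j (syst n M j + d) hj ltac:(lra)) as [w [hw hw2]].
exists w. split; auto. intros l hl. destruct (Rle_dec (normAv n M (w l)) (syst n M j)) as [h|h]; auto.
exfalso. apply (hgap (w l)). specialize (hw2 l hl). lra.
Qed.

Definition Tle (n : nat) (M : mat) (r : R) : vecZ -> Prop := fun v => normAv n M v <= r.

Lemma Lambda_S n M j x : Lambda n M (S j) x <-> inspan n (Tle n M (syst n M (S j))) x.
Proof. unfold Lambda, inspan, Tle. tauto. Qed.

Lemma Lambda_mono n M a b x : (1 <= a)%nat -> (a <= b)%nat -> (b <= n)%nat -> Lambda n M a x -> Lambda n M b x.
Proof.
intros ha hab hb. destruct a as [|a]; [lia|]. destruct b as [|b]; [lia|].
rewrite !Lambda_S. apply inspan_mono. unfold Tle. intros v hv.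
pose proof (syst_mono n M (S a) (S b) hab hb). lra.
Qed.

Lemma Lambda_zero_in n M j : Lambda n M j (fun _ => 0).
Proof. destruct j. simpl; auto. apply Lambda_S. apply inspan_zero. Qed.

Fixpoint srch (f : nat -> bool) (j : nat) : nat :=
  match j with O => O | S j' => if f (S j') then S j' else srch f j' end.

Lemma srch_spec f m : (srch f m <= m)%nat /\ (srch f m = O \/ f (srch f m) = true) /\
  forall j, (srch f m < j <= m)%nat -> f j = false.
Proof.
induction m; simpl.
- split; [lia|]. split; [auto|]. intros; lia.
- destruct (f (S m)) eqn:e.
  + split; [lia|]. split; [auto|]. intros; lia.
  + destruct IHm as [h1 [h2 h3]]. split; [lia|]. split; auto.
    intros j hj. destruct (Nat.eq_dec j (S m)). subst; auto. apply h3; lia.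
Qed.

Definition fle (n : nat) (Bk A : mat) (eps : R) (i j : nat) : bool :=
  if Rle_dec (syst n Bk j) (syst n A i + eps) then true else false.

Definition kap (n : nat) (Bk A : mat) (eps : R) (i : nat) : nat :=
  if Nat.eqb i 0 then O else srch (fle n Bk A eps i) n.

Lemma good_Snorm n M C v b : good n M C -> normAv n M v <= b -> Snorm n v <= C * b.
Proof. intros [hC hg] h. eapply Rle_trans. apply hg. apply Rmult_le_compat_l; auto. Qed.

Lemma same_space_trans P Q S : same_space P Q -> same_space Q S -> same_space P S.
Proof. unfold same_space; intros h1 h2 x. rewrite h1; auto. Qed.
Lemma same_space_sym P Q : same_space P Q -> same_space Q P.
Proof. unfold same_space; intros h1 x. rewrite h1; tauto. Qed.

Lemma span_family_in n T j (y : nat -> vecZ) (u : vecZ) :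
  (forall l, (l < j)%nat -> T (y l)) ->
  (exists d : nat -> R, forall t, (t < n)%nat -> IZR (u t) = sumR j (fun l => d l * IZR (y l t))) ->
  inspan n T (fun t => IZR (u t)).
Proof.
intros hy [d hd]. eapply inspan_ext. intros t ht. symmetry. apply hd; auto.
apply inspan_sum. intros l hl. apply inspan_mem. auto.
Qed.

Lemma part1_k n A Bk C eps :
  0 < eps <= 1 -> good n A C -> good n Bk C ->
  (forall i, (1 <= i <= n)%nat -> forall v, ~ (syst n A i < normAv n A v < syst n A i + 2 * eps)) ->
  (forall v, Snorm n v <= C * (syst n A n + 2) -> Rabs (normAv n Bk v - normAv n A v) < eps / 2) ->
  forall i, (1 <= i <= n)%nat ->
  let j := kap n Bk A eps i in
  (1 <= j <= n)%nat /\ (i <= j)%nat /\ syst n Bk j <= syst n A i + eps /\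
  (forall j', (j < j' <= n)%nat -> syst n A i + eps < syst n Bk j') /\
  kappa_prop n Bk A i j /\
  (forall j', (1 <= j' <= n)%nat -> kappa_prop n Bk A i j' -> j' = j).
Proof.
intros heps gA gB hgap happ i hi j.
assert (hj : j = srch (fle n Bk A eps i) n).
{ unfold j, kap. destruct (Nat.eqb_spec i 0); [lia|auto]. }
destruct (srch_spec (fle n Bk A eps i) n) as [s1 [s2 s3]]. rewrite <- hj in s1, s2, s3.
set (smax := syst n A n).
assert (hsi : syst n A i <= smax) by (apply syst_mono; lia).
assert (hsi0 : 0 <= syst n A i) by (apply syst_nonneg; lia).
assert (hfi : fle n Bk A eps i i = true).
{ destruct (syst_attained n A C i gA ltac:(lia)) as [w [hw hw2]].
  unfold fle. destruct (Rle_dec (syst n Bk i) (syst n A i + eps)) as [h|h]; auto. exfalso. apply h.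
  apply (syst_le_fam n Bk i w); auto; try lia; try lra.
  intros l hl. specialize (hw2 l hl).
  assert (Snorm n (w l) <= C * (smax + 2)). { apply (good_Snorm n A); auto. lra. }
  specialize (happ (w l) H). apply Rabs_def2 in happ. lra. }
assert (hij : (i <= j)%nat).
{ destruct (le_lt_dec i j); auto. rewrite s3 in hfi. discriminate. lia. }
assert (hsj : syst n Bk j <= syst n A i + eps).
{ destruct s2 as [e|e]. lia. unfold fle in e. destruct (Rle_dec (syst n Bk j) (syst n A i + eps)); auto. discriminate. }
assert (hgt : forall j', (j < j' <= n)%nat -> syst n A i + eps < syst n Bk j').
{ intros j' h. specialize (s3 j' h). unfold fle in s3. destruct (Rle_dec (syst n Bk j') (syst n A i + eps)). discriminate. lra. }
assert (hT : forall v, Tle n Bk (syst n Bk j) v -> Tle n A (syst n A i) v).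
{ intros v hv. unfold Tle in *.
  assert (Snorm n v <= C * (smax + 2)). { apply (good_Snorm n Bk); auto. lra. }
  specialize (happ v H). apply Rabs_def2 in happ.
  destruct (Rle_dec (normAv n A v) (syst n A i)) as [h|h]; auto. exfalso.
  apply (hgap i hi v). lra. }
destruct j as [|j']; [lia|].
assert (hF3 : forall x, Lambda n Bk (S j') x -> Lambda n A i x).
{ intros x hx. destruct i as [|i0]; [lia|]. rewrite Lambda_S in hx |- *.
  eapply inspan_mono; [|exact hx]. apply hT. }
assert (hF4 : forall x, Lambda n A i x -> Lambda n Bk (S j') x).
{ intros x hx. destruct i as [|i0]; [lia|]. rewrite Lambda_S in hx |- *.
  destruct hx as [m [w [c [hw hx]]]].
  eapply inspan_ext. intros t ht. symmetry. apply hx; auto.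
  apply inspan_sum. intros l hl. specialize (hw l hl).
  apply NNPP. intros hn.
  destruct (syst_attained n Bk C (S j') gB s1) as [y [hy hy2]].
  assert (hnd : ~ exists d : nat -> R, forall t, (t < n)%nat -> IZR (w l t) = sumR (S j') (fun q => d q * IZR (y q t))).
  { intros hd. apply hn. apply (span_family_in n _ (S j') y); auto. }
  pose proof (indep_ext n (S j') y (w l) hy hnd) as hind.
  destruct (Nat.eq_dec (S j') n) as [e|e].
  - pose proof (indep_le_n n _ _ hind). lia.
  - assert (Snorm n (w l) <= C * (smax + 2)). { apply (good_Snorm n A); auto. unfold Tle in hw. lra. }
    specialize (happ (w l) H). apply Rabs_def2 in happ. unfold Tle in hw.
    assert (syst n Bk (S (S j')) <= syst n A (S i0) + eps).
    { apply (syst_le_fam n Bk (S (S j')) (wext y (S j') (w l))); auto. lia.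
      intros q hq. unfold wext. destruct (Nat.ltb_spec q (S j')). specialize (hy2 q H0). lra. lra. lra. }
    specialize (hgt (S (S j')) ltac:(lia)). lra. }
assert (hsame : same_space (Lambda n Bk (S j')) (Lambda n A i)).
{ intros x; split; auto. }
assert (hF5 : S j' <> n -> ~ same_space (Lambda n Bk (S (S j'))) (Lambda n A i)).
{ intros hne hs.
  destruct (syst_attained n Bk C (S (S j')) gB ltac:(lia)) as [z [hz hz2]].
  destruct (rank_lemma n (Tle n Bk (syst n Bk (S j'))) (S (S j')) z hz) as [u [hu hu2]].
  { intros l hl. apply Lambda_S. apply hsame. apply hs. apply Lambda_S. apply inspan_mem. unfold Tle. auto. }
  assert (syst n Bk (S (S j')) <= syst n Bk (S j')).
  { apply (syst_le_fam n Bk _ u); auto. lia. apply syst_nonneg; lia. }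
  specialize (hgt (S (S j')) ltac:(lia)). lra. }
split; [lia|]. split; [auto|]. split; [auto|]. split; [auto|]. split.
{ split; auto. }
intros j2 hj2 [hp1 hp2].
destruct (lt_eq_lt_dec j2 (S j')) as [[hlt|heq]|hlt]; auto; exfalso.
- apply hp2. lia. intros x; split; intros hx.
  + apply hsame. apply (Lambda_mono n Bk (S j2) (S j')); auto; lia.
  + apply (Lambda_mono n Bk j2 (S j2)); try lia. apply hp1; auto.
- apply hF5. lia. intros x; split; intros hx.
  + apply hp1. apply (Lambda_mono n Bk (S (S j')) j2); auto; lia.
  + apply (Lambda_mono n Bk (S j') (S (S j'))); try lia. apply hsame; auto.
Qed.

Lemma below_in_Lambda n A C i1 u : good n A C -> (1 <= i1)%nat -> (S i1 <= n)%nat ->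
  syst n A i1 < syst n A (S i1) -> normAv n A u < syst n A (S i1) ->
  Lambda n A i1 (fun t => IZR (u t)).
Proof.
intros gA h1 h2 hlt hu. destruct i1 as [|i0]; [lia|]. rewrite Lambda_S.
apply NNPP. intros hn.
destruct (syst_attained n A C (S i0) gA ltac:(lia)) as [y [hy hy2]].
assert (hnd : ~ exists d : nat -> R, forall t, (t < n)%nat -> IZR (u t) = sumR (S i0) (fun q => d q * IZR (y q t))).
{ intros hd. apply hn. apply (span_family_in n _ (S i0) y); auto. }
pose proof (indep_ext n (S i0) y u hy hnd) as hind.
assert (syst n A (S (S i0)) <= Rmax (syst n A (S i0)) (normAv n A u)).
{ apply (syst_le_fam n A _ (wext y (S i0) u)); auto.
  intros q hq. unfold wext. destruct (Nat.ltb_spec q (S i0)).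
  specialize (hy2 q H). pose proof (Rmax_l (syst n A (S i0)) (normAv n A u)). lra.
  apply Rmax_r.
  pose proof (normAv_nonneg n A u). pose proof (Rmax_r (syst n A (S i0)) (normAv n A u)). lra. }
unfold Rmax in H. destruct (Rle_dec (syst n A (S i0)) (normAv n A u)); lra.
Qed.

Lemma part2_k n A Bk C eps eta :
  0 < eps <= 1 -> good n A C -> good n Bk C ->
  (forall i, (1 <= i <= n)%nat -> forall v, ~ (syst n A i < normAv n A v < syst n A i + 2 * eps)) ->
  (forall v, Snorm n v <= C * (syst n A n + 2) -> Rabs (normAv n Bk v - normAv n A v) < eps / 2) ->
  0 < eta <= eps ->
  (forall v, Snorm n v <= C * (syst n A n + 2) -> Rabs (normAv n Bk v - normAv n A v) < eta / 2) ->
  forall i i', (1 <= i <= n)%nat -> (1 <= i' <= n)%nat ->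
  syst n A i' = syst n A i -> (forall l, (1 <= l < i')%nat -> syst n A l <> syst n A i) ->
  forall jj, (kap n Bk A eps (i' - 1) < jj <= kap n Bk A eps i)%nat ->
  Rabs (syst n Bk jj - syst n A i) <= eta / 2.
Proof.
intros heps gA gB hgap happ heta happ2 i i' hi hi' hsi' hmin jj hjj.
destruct (part1_k n A Bk C eps heps gA gB hgap happ i hi) as [j1 [j2 [j3 [j4 [j5 j6]]]]].
set (j := kap n Bk A eps i) in *.
set (smax := syst n A n).
assert (hsi : syst n A i <= smax) by (apply syst_mono; lia).
assert (hsi0 : 0 <= syst n A i) by (apply syst_nonneg; lia).
assert (hup : syst n Bk j <= syst n A i + eta / 2).
{ destruct (syst_attained n Bk C j gB ltac:(lia)) as [y [hy hy2]].
  destruct (rank_lemma n (Tle n A (syst n A i)) j y hy) as [u [hu hu2]].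
  { intros l hl. destruct i as [|i0]; [lia|]. rewrite <- Lambda_S. apply (proj1 j5).
    destruct j as [|j0]; [lia|]. rewrite Lambda_S. apply inspan_mem. unfold Tle; auto. }
  apply (syst_le_fam n Bk j u); auto. lia. 2: lra.
  intros l hl. specialize (hu2 l hl). unfold Tle in hu2.
  assert (Snorm n (u l) <= C * (smax + 2)). { apply (good_Snorm n A); auto. lra. }
  specialize (happ2 (u l) H). apply Rabs_def2 in happ2. lra. }
assert (hjjj : syst n Bk jj <= syst n Bk j) by (apply syst_mono; lia).
assert (hlow : syst n A i - eta / 2 <= syst n Bk jj).
{ destruct (Rle_dec (syst n A i - eta / 2) (syst n Bk jj)) as [h|h]; auto. exfalso.
  set (k' := kap n Bk A eps (i' - 1)) in *.
  assert (syst n Bk (S k') <= syst n Bk jj) by (apply syst_mono; lia).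
  destruct (syst_lt_fam n Bk (S k') (syst n A i - eta / 2) ltac:(lia) ltac:(lra)) as [x [hx hx2]].
  assert (hxA : forall l, (l < S k')%nat -> normAv n A (x l) < syst n A i).
  { intros l hl. specialize (hx2 l hl).
    assert (Snorm n (x l) <= C * (smax + 2)). { apply (good_Snorm n Bk); auto. lra. }
    specialize (happ2 (x l) H0). apply Rabs_def2 in happ2. lra. }
  destruct (Nat.eq_dec i' 1) as [e|e].
  - assert (k' = O). { unfold k', kap. subst. simpl. auto. }
    rewrite H0 in hx, hxA.
    assert (syst n A 1 <= normAv n A (x O)).
    { apply (syst_le_fam n A 1 x); auto. lia. intros l hl. assert (l = O) by lia. subst; lra.
      apply normAv_nonneg. }
    specialize (hxA O ltac:(lia)). subst i'. lra.
  - set (i1 := (i' - 1)%nat) in *.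
    destruct (part1_k n A Bk C eps heps gA gB hgap happ i1 ltac:(lia)) as [k1 [k2 [k3 [k4 [k5 k6]]]]].
    fold k' in k1, k2, k3, k4, k5, k6.
    assert (hlt1 : syst n A i1 < syst n A i').
    { assert (hm : syst n A i1 <= syst n A i') by (apply syst_mono; lia).
      specialize (hmin i1 ltac:(lia)). rewrite hsi'. rewrite hsi' in hm. lra. }
    assert (hin : forall l, (l < S k')%nat -> Lambda n Bk k' (fun t => IZR (x l t))).
    { intros l hl. apply (proj2 (proj1 k5 _)). replace i' with (S i1) in hlt1 by lia.
      apply (below_in_Lambda n A C i1 (x l) gA); try lia; auto.
      replace (S i1) with i' by lia. rewrite hsi'. auto. }
    destruct k' as [|k0]; [lia|].
    destruct (rank_lemma n (Tle n Bk (syst n Bk (S k0))) (S (S k0)) x hx) as [u [hu hu2]].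
    { intros l hl. rewrite <- Lambda_S. auto. }
    assert (syst n Bk (S (S k0)) <= syst n Bk (S k0)).
    { apply (syst_le_fam n Bk _ u); auto. lia. apply syst_nonneg; lia. }
    specialize (k4 (S (S k0)) ltac:(lia)). lra. }
apply Rabs_le. lra.
Qed.

Lemma transfer n M M' : (forall v, normAv n M v = normAv n M' v) ->
  syst n M = syst n M' /\ Lambda n M = Lambda n M'.
Proof.
intros h. assert (H : normAv n M = normAv n M') by (apply functional_extensionality; auto).
split.
- unfold syst, syst_set. rewrite H. reflexivity.
- unfold Lambda, syst, syst_set. rewrite H. reflexivity.
Qed.

Lemma finite_eventually (Q : nat -> nat -> Prop) m :
  (forall i, (i < m)%nat -> exists K, forall k, (K <= k)%nat -> Q i k) ->
  exists K, forall k, (K <= k)%nat -> forall i, (i < m)%nat -> Q i k.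
Proof.
induction m; intros h.
- exists O. intros; lia.
- destruct IHm as [K1 h1]. intros; apply h; lia.
  destruct (h m ltac:(lia)) as [K2 h2].
  exists (max K1 K2). intros k hk i hi. destruct (Nat.eq_dec i m). subst; apply h2; lia. apply h1; lia.
Qed.

Lemma uconv n (B : nat -> mat) (A : mat) :
  (forall i j, (i < n)%nat -> (j < n)%nat -> Un_cv (fun k => B k i j) (A i j)) ->
  forall e, 0 < e -> exists K, forall k, (K <= k)%nat -> forall i j, (i < n)%nat -> (j < n)%nat ->
    Rabs (B k i j - A i j) <= e.
Proof.
intros h e he.
destruct (finite_eventually (fun i k => forall j, (j < n)%nat -> Rabs (B k i j - A i j) <= e) n) as [K hK].
- intros i hi. destruct (finite_eventually (fun j k => Rabs (B k i j - A i j) <= e) n) as [K hK].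
  + intros j hj. destruct (h i j hi hj e he) as [K hK]. exists K. intros k hk.
    specialize (hK k hk). unfold R_dist in hK. lra.
  + exists K. intros k hk j hj. apply hK; auto.
- exists K. intros k hk i j hi hj. apply hK; auto.
Qed.

Lemma gap_fin n M C (x : nat -> R) m : good n M C ->
  exists d, 0 < d /\ forall i, (i < m)%nat -> forall v, ~ (x i < normAv n M v < x i + d).
Proof.
intros hg. induction m.
- exists 1. split; [lra|]. intros; lia.
- destruct IHm as [d1 [hd1 h1]]. destruct (gap n M C (x m) hg) as [d2 [hd2 h2]].
  exists (Rmin d1 d2). split. apply Rmin_pos; auto.
  pose proof (Rmin_l d1 d2). pose proof (Rmin_r d1 d2).
  intros i hi v hv. destruct (Nat.eq_dec i m).
  + subst. apply (h2 v). lra.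
  + apply (h1 i ltac:(lia) v). lra.
Qed.

Theorem mainTheorem10 (n : nat) (Aseq : nat -> mat) (A : mat) :
  (forall k, SL n (Aseq k)) -> SL n A ->
  (* [Aseq k] -> [A] in SO_n \ SL_n R *)
  (exists Rot : nat -> mat, (forall k, SO n (Rot k)) /\
     forall i j, (i < n)%nat -> (j < n)%nat ->
       Un_cv (fun k => mat_mul n (Rot k) (Aseq k) i j) (A i j)) ->
  exists (k0 : nat) (kappa : nat -> nat -> nat),
    (forall k, (k0 <= k)%nat ->
       kappa k O = O /\
       forall i, (1 <= i <= n)%nat ->
         (1 <= kappa k i <= n)%nat /\ kappa_prop n (Aseq k) A i (kappa k i) /\
         forall j, (1 <= j <= n)%nat -> kappa_prop n (Aseq k) A i j -> j = kappa k i) /\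
    (forall i i', (1 <= i <= n)%nat -> (1 <= i' <= n)%nat ->
       syst n A i' = syst n A i ->
       (forall l, (1 <= l < i')%nat -> syst n A l <> syst n A i) ->
       forall jseq : nat -> nat,
         (forall k, (k0 <= k)%nat -> (kappa k (i' - 1) < jseq k <= kappa k i)%nat) ->
         Un_cv (fun k => syst n (Aseq k) (jseq k)) (syst n A i)).
Proof.
intros _ hA [Rot [hRot hconv]].
set (B := fun k => mat_mul n (Rot k) (Aseq k)).
assert (htr : forall k, syst n (Aseq k) = syst n (B k) /\ Lambda n (Aseq k) = Lambda n (B k)).
{ intros k. apply transfer. intros v. unfold B. rewrite normAv_orth; auto. }
assert (hkp : forall k i j, kappa_prop n (Aseq k) A i j <-> kappa_prop n (B k) A i j).
{ intros k i j. unfold kappa_prop. destruct (htr k) as [_ e]. rewrite e. tauto. }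
destruct (inv_exists n A) as [P hP]. { unfold SL in hA. rewrite hA. lra. }
set (C := 2 * Psum n P).
pose proof (Psum_nonneg n P) as hPs.
assert (gA : good n A C) by (apply good_A; auto).
pose proof (uconv n B A hconv) as hu.
destruct (hu (/ (2 * (Psum n P + 1)))) as [K1 hK1].
{ apply Rinv_0_lt_compat. lra. }
assert (gB : forall k, (K1 <= k)%nat -> good n (B k) C).
{ intros k hk. apply (good_B n A (B k) P (/ (2 * (Psum n P + 1)))); auto.
  apply (Rmult_le_reg_l (2 * (Psum n P + 1))). lra.
  rewrite <- Rmult_assoc. rewrite (Rmult_comm _ (Psum n P)). rewrite Rmult_assoc. rewrite Rinv_r by lra.
  field_simplify; lra. }
destruct (gap_fin n A C (syst n A) (S n) gA) as [d [hd hgap]].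
set (eps := Rmin (d / 2) 1).
assert (heps : 0 < eps <= 1). { split. apply Rmin_pos; lra. apply Rmin_r. }
assert (heps2 : 2 * eps <= d). { pose proof (Rmin_l (d / 2) 1). unfold eps. lra. }
assert (hgap' : forall i, (1 <= i <= n)%nat -> forall v, ~ (syst n A i < normAv n A v < syst n A i + 2 * eps)).
{ intros i hi v hv. apply (hgap i ltac:(lia) v). lra. }
set (R0 := C * (syst n A n + 2)).
assert (hR0 : 0 <= R0). { unfold R0. pose proof (syst_nonneg n A n (le_n n)). unfold C. nra. }
assert (happ : forall eta, 0 < eta -> exists K, forall k, (K <= k)%nat ->
   forall v, Snorm n v <= R0 -> Rabs (normAv n (B k) v - normAv n A v) < eta).
{ intros eta heta. destruct (approx n A eta R0 heta hR0) as [e [he happ]].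
  destruct (hu e he) as [K hK]. exists K. intros k hk v hv. apply happ; auto. }
destruct (happ (eps / 2) ltac:(lra)) as [K2 hK2].
exists (max K1 K2), (fun k i => kap n (B k) A eps i).
split.
- intros k hk. split. { unfold kap. simpl. auto. }
  intros i hi.
  destruct (part1_k n A (B k) C eps heps gA (gB k ltac:(lia)) hgap' (hK2 k ltac:(lia)) i hi)
    as [j1 [j2 [j3 [j4 [j5 j6]]]]].
  split; auto. split. apply hkp; auto.
  intros j hj hp. apply j6; auto. apply hkp; auto.
- intros i i' hi hi' hs hmin jseq hjseq eta heta.
  set (eta' := Rmin eta eps).
  assert (he' : 0 < eta' <= eps). { split. apply Rmin_pos; lra. apply Rmin_r. }
  destruct (happ (eta' / 2) ltac:(lra)) as [K3 hK3].
  exists (max (max K1 K2) K3). intros k hk.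
  pose proof (part2_k n A (B k) C eps eta' heps gA (gB k ltac:(lia)) hgap' (hK2 k ltac:(lia)) he'
    (hK3 k ltac:(lia)) i i' hi hi' hs hmin (jseq k) (hjseq k ltac:(lia))) as h.
  unfold R_dist. destruct (htr k) as [e _]. rewrite e.
  pose proof (Rmin_l eta eps). fold eta' in H. lra.
Qed.
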